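(* Let $1\le r\le s\le t$ and let $u=ABCd$, $v=A'B'C'd'$ be vertices of $E3C(r,s,t)$ with $A\ne A'$, $B=B'$, $C\ne C'$ and $d\ne d'$. Then there exist $2r+2$ pairwise internally disjoint $u$–$v$ paths in $E3C(r,s,t)$, each of length at most $r+t+7$.
   Context: The exchanged 3-ary $n$-cube $E3C(r,s,t)$ ($r,s,t\ge1$, $n=r+s+t+1$): vertices are strings written $x=ABCd$ with $A\in\{0,1,2\}^r$, $B\in\{0,1,2\}^s$, $C\in\{0,1,2\}^t$, $d\in\{0,1,2\}$. Two distinct vertices $x=ABCd$, $y=A'B'C'd'$ are adjacent iff one of: (E0) $A=A',B=B',C=C'$ and $d\ne d'$; (E1) $d=d'=0$, $A=A'$, $B=B'$ and $C,C'$ differ in exactly one position; (E2) $d=d'=1$, $A=A'$, $C=C'$ and $B,B'$ differ in exactly one position; (E3) $d=d'=2$, $B=B'$, $C=C'$ and $A,A'$ differ in exactly one position. Paths are internally disjoint if they share no vertices other than their endpoints; length = number of edges. *)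

(* Defs.v *)
From mathcomp Require Import all_boot.
Set Implicit Arguments. Unset Strict Implicit. Unset Printing Implicit Defensive.

Definition word (k : nat) := {ffun 'I_k -> 'I_3}.
Definition e3c_vertex (r s t : nat) : finType :=
  (word r * word s * word t * 'I_3)%type.

Definition vA r s t (x : e3c_vertex r s t) : word r := x.1.1.1.
Definition vB r s t (x : e3c_vertex r s t) : word s := x.1.1.2.
Definition vC r s t (x : e3c_vertex r s t) : word t := x.1.2.
Definition vd r s t (x : e3c_vertex r s t) : 'I_3 := x.2.

Definition diff1 k (f g : word k) : bool := #|[set i | f i != g i]| == 1.

Definition e3c_adj r s t : rel (e3c_vertex r s t) := fun x y =>
  [|| [&& vA x == vA y, vB x == vB y, vC x == vC y & vd x != vd y],
      [&& val (vd x) == 0, val (vd y) == 0, vA x == vA y,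
                   vB x == vB y & diff1 (vC x) (vC y)],
      [&& val (vd x) == 1, val (vd y) == 1, vA x == vA y,
                   vC x == vC y & diff1 (vB x) (vB y)]
   | [&& val (vd x) == 2, val (vd y) == 2, vB x == vB y,
                   vC x == vC y & diff1 (vA x) (vA y)] ].

(* A u-v path is given by the vertex sequence u :: p: consecutive vertices
   adjacent, ending at v, no repeated vertex. Its length is size p. *)
Definition is_path r s t (u v : e3c_vertex r s t) (p : seq (e3c_vertex r s t)) : bool :=
  [&& path (@e3c_adj r s t) u p, last u p == v & uniq (u :: p)].

Definition int_disjoint r s t (u v : e3c_vertex r s t) (p q : seq (e3c_vertex r s t)) : Prop :=
  forall x, x \in u :: p -> x \in u :: q -> x = u \/ x = v.

(* Main.v *)
Require Import Defs.
From mathcomp Require Import all_boot zify fingroup perm.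
Set Implicit Arguments. Unset Strict Implicit. Unset Printing Implicit Defensive.

Section Words.
Variable n : nat.
Implicit Types X Y Z : word n.

Definition upd X Y (S : seq 'I_n) : word n := [ffun l => if l \in S then Y l else X l].
Definition dord X Y (o : seq 'I_n) := [seq l <- o | X l != Y l].
Definition walk X Y o : seq (word n) :=
  [seq upd X Y (take m.+1 (dord X Y o)) | m <- iota 0 (size (dord X Y o))].
Definition full (o : seq 'I_n) := uniq o /\ forall l, l \in o.

Lemma diff1C X Y : diff1 X Y = diff1 Y X.
Proof.
rewrite /diff1 (_ : [set i | Y i != X i] = [set i | X i != Y i]) //.
by apply/setP => l; rewrite !inE eq_sym.
Qed.

Lemma upd0 X Y : upd X Y [::] = X.
Proof. by apply/ffunP => l; rewrite ffunE. Qed.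

Lemma updd X Y o : full o -> upd X Y (dord X Y o) = Y.
Proof.
case=> _ ho; apply/ffunP => l; rewrite ffunE mem_filter ho andbT.
by case: eqP.
Qed.

Lemma nth_notin_take (T : eqType) (x0 : T) (d : seq T) m :
  uniq d -> m < size d -> nth x0 d m \notin take m d.
Proof.
move=> ud hm; move: ud; rewrite -{1}(cat_take_drop m d) (drop_nth x0 hm) cat_uniq.
case/and3P=> _ /hasPn H _; apply/negP => Hin.
by have := H _ (mem_head _ _); rewrite Hin.
Qed.

Lemma diff1_upd X Y d m : uniq d -> (forall l, l \in d -> X l != Y l) ->
  m < size d -> diff1 (upd X Y (take m d)) (upd X Y (take m.+1 d)).
Proof.
case: d => [|x0 d'] //; set d := x0 :: d' => ud hd hm.
rewrite /diff1; apply/eqP.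
rewrite (_ : [set l | _] = [set nth x0 d m]) ?cards1 //.
apply/setP => l; rewrite !inE !ffunE (take_nth x0 hm) mem_rcons in_cons.
case: (eqVneq l (nth x0 d m)) => [->|hl] /=.
  rewrite (negbTE (nth_notin_take x0 ud hm)) /=.
  by have := hd _ (mem_nth x0 hm); rewrite eq_sym => ->.
by rewrite eqxx.
Qed.

Lemma card_upd X Y d m : uniq d -> (forall l, l \in d -> X l != Y l) ->
  m <= size d -> #|[set l | upd X Y (take m d) l != X l]| = m.
Proof.
move=> ud hd hm.
rewrite (_ : [set l | _] = [set l in take m d]).
  rewrite cardsE; move/card_uniqP: (take_uniq m ud) => ->.
  by rewrite size_takel.
apply/setP => l; rewrite !inE ffunE; case: ifP => hl; last by rewrite eqxx.
by rewrite eq_sym; apply: hd; exact: mem_take hl.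
Qed.

Lemma dord_uniq X Y o : uniq o -> uniq (dord X Y o).
Proof. exact: filter_uniq. Qed.

Lemma dord_neq X Y o l : l \in dord X Y o -> X l != Y l.
Proof. by rewrite mem_filter => /andP[]. Qed.

Lemma walk_cons X Y o :
  X :: walk X Y o = [seq upd X Y (take m (dord X Y o)) | m <- iota 0 (size (dord X Y o)).+1].
Proof.
rewrite /walk /= take0 upd0; congr (_ :: _).
by rewrite (iotaDl 1 0) -map_comp.
Qed.

Lemma path_zf (f : nat -> word n) m k :
  (forall x, m <= x -> x < m + k -> diff1 (f x) (f x.+1)) ->
  path (@diff1 n) (f m) [seq f x.+1 | x <- iota m k].
Proof.
elim: k m => [|k IH] m H //=.
rewrite H ?leqnn ?addnS ?ltnS ?leq_addr //=.
apply: IH => x h1 h2; apply: H; [exact: ltnW | by rewrite addnS -addSn].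
Qed.

Lemma walk_path X Y o : uniq o -> path (@diff1 n) X (walk X Y o).
Proof.
move=> uo; rewrite /walk; have := @path_zf (fun m => upd X Y (take m (dord X Y o))) 0 (size (dord X Y o)).
rewrite /= take0 upd0; apply => x _ hx.
apply: diff1_upd => //; [exact: dord_uniq | exact: dord_neq].
Qed.

Lemma last_iota m k : last m (iota m.+1 k) = m + k.
Proof. by elim: k m => [|k IH] m /=; rewrite ?addn0 // IH addnS. Qed.

Lemma walk_last X Y o : full o -> last X (walk X Y o) = Y.
Proof.
move=> fo; rewrite /walk; set d := dord X Y o.
have -> : [seq upd X Y (take m.+1 d) | m <- iota 0 (size d)] =
          [seq upd X Y (take m d) | m <- iota 1 (size d)].
  by rewrite (iotaDl 1 0 (size d)) -map_comp.
have := @last_map _ _ (fun m => upd X Y (take m d)) (iota 1 (size d)) 0.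
rewrite /= take0 upd0 => ->; rewrite last_iota add0n take_size; exact: updd.
Qed.

Lemma walk_uniq X Y o : uniq o -> uniq (X :: walk X Y o).
Proof.
move=> uo; rewrite walk_cons; rewrite map_inj_in_uniq ?iota_uniq //.
move=> a b; rewrite !mem_iota !add0n !ltnS /= => ha hb e.
have ud := dord_uniq X Y uo; have hd := @dord_neq X Y o.
by rewrite -(card_upd ud hd ha) -(card_upd ud hd hb) e.
Qed.

Lemma full_size o : full o -> size o <= n.
Proof.
case=> uo _; move/card_uniqP: uo => <-.
by apply: leq_trans (max_card _) _; rewrite card_ord.
Qed.

Lemma walk_size X Y o : full o -> size (walk X Y o) <= n.
Proof.
move=> fo; rewrite size_map size_iota; apply: leq_trans (full_size fo).
by rewrite size_filter count_size.
Qed.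

Lemma walk_mem X Y o Z : Z \in walk X Y o ->
  exists2 m, m < size (dord X Y o) & Z = upd X Y (take m.+1 (dord X Y o)).
Proof. by case/mapP => m; rewrite mem_iota add0n => hm ->; exists m. Qed.

Lemma walk_neq X Y o Z : uniq o -> Z \in walk X Y o -> Z != X.
Proof.
move=> uo hZ; have := walk_uniq X Y uo; rewrite cons_uniq => /andP[h _].
by apply/eqP => e; move: h; rewrite -{1}e hZ.
Qed.

Definition ofirst (p : 'I_n) := p :: [seq l <- enum 'I_n | l != p].
Definition olast (p : 'I_n) := rcons [seq l <- enum 'I_n | l != p] p.
Definition oall := enum 'I_n.

Lemma full_all : full oall.
Proof. by split; [exact: enum_uniq | move=> l; rewrite mem_enum]. Qed.

Lemma full_first p : full (ofirst p).
Proof.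
split; first by rewrite /= mem_filter eqxx /= filter_uniq ?enum_uniq.
by move=> l; rewrite in_cons mem_filter mem_enum andbT; case: eqP.
Qed.

Lemma full_last p : full (olast p).
Proof.
split; first by rewrite rcons_uniq mem_filter eqxx /= filter_uniq ?enum_uniq.
by move=> l; rewrite mem_rcons in_cons mem_filter mem_enum andbT; case: eqP.
Qed.

Lemma walk_first X Y p Z : Z \in walk X Y (ofirst p) -> Z p = Y p.
Proof.
case/walk_mem => m hm ->; rewrite ffunE /dord /=.
case: eqP => [->|/eqP hp]; first by case: ifP.
by rewrite /= in_cons eqxx.
Qed.

Lemma walk_lastp X Y p Z : Z \in walk X Y (olast p) -> Z != Y -> Z p = X p.
Proof.
move=> hZ hZY; case/walk_mem: hZ => m hm eZ.
case: (eqVneq (X p) (Y p)) => [hp|hp].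
  by rewrite eZ ffunE hp; case: ifP.
move: hm eZ; rewrite {1 2}/dord /olast filter_rcons hp.
set d' := [seq l <- _ | _].
rewrite size_rcons ltnS leq_eqVlt => /orP[/eqP hm|hm] eZ.
  case/negP: hZY; apply/eqP; rewrite eZ hm -(size_rcons d' p) take_size.
  have -> : rcons d' p = dord X Y (olast p) by rewrite /dord /olast filter_rcons hp.
  apply: updd; exact: full_last.
rewrite eZ ffunE -cats1 takel_cat //.
rewrite (negbTE (_ : p \notin _)) //; apply/negP => /mem_take.
by rewrite /d' !mem_filter eqxx andbF.
Qed.

End Words.
Definition o0 : 'I_3 := @Ordinal 3 0 isT.
Definition o1 : 'I_3 := @Ordinal 3 1 isT.
Definition o2 : 'I_3 := @Ordinal 3 2 isT.
Definition add3 (x a : 'I_3) : 'I_3 := @Ordinal 3 ((x + a) %% 3) (ltn_pmod _ (isT : 0 < 3)).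

Lemma add3_neq x a : a != o0 -> add3 x a != x.
Proof. by case: x => [[|[|[|?]]] ?]; case: a => [[|[|[|?]]] ?]. Qed.

Lemma add3_inj x a b : add3 x a = add3 x b -> a = b.
Proof.
case: x => [[|[|[|?]]] ?]; case: a => [[|[|[|?]]] ?]; case: b => [[|[|[|?]]] ?] //=;
  move/(congr1 val) => //= _; exact: val_inj.
Qed.

Definition sh n (w : word n) (i : 'I_n) (a : 'I_3) : word n :=
  [ffun l => if l == i then add3 (w l) a else w l].

Lemma sh_neq n (w : word n) i a : a != o0 -> sh w i a != w.
Proof.
move=> ha; apply/eqP => /ffunP /(_ i); rewrite ffunE eqxx => e.
by move: (add3_neq (w i) ha); rewrite e eqxx.
Qed.

Lemma diff1_sh n (w : word n) i a : a != o0 -> diff1 w (sh w i a).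
Proof.
move=> ha; rewrite /diff1 (_ : [set l | _] = [set i]) ?cards1 //.
apply/setP => l; rewrite !inE ffunE; case: (eqVneq l i) => [->|hl].
  by rewrite eq_sym add3_neq.
by rewrite eqxx.
Qed.

Lemma sh_inj n (w : word n) i j a b : a != o0 -> b != o0 ->
  sh w i a = sh w j b -> i = j /\ a = b.
Proof.
move=> ha hb /ffunP e; have ei := e i; rewrite !ffunE eqxx in ei.
case: (eqVneq i j) => [eij|nij].
  by split => //; move: ei; rewrite eij eqxx; exact: add3_inj.
by move: (add3_neq (w i) ha); rewrite ei (negbTE nij) eqxx.
Qed.

Definition mkv r s t (a : word r) (b : word s) (c : word t) (d : 'I_3) : e3c_vertex r s t :=
  (a, b, c, d).

Lemma mkv_inj r s t (a a' : word r) (b b' : word s) (c c' : word t) d d' :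
  mkv a b c d = mkv a' b' c' d' -> [/\ a = a', b = b', c = c' & d = d'].
Proof. by case. Qed.

Lemma path_lift (T U : Type) (e : rel T) (e' : rel U) (f : T -> U) x s :
  (forall y z, e y z -> e' (f y) (f z)) -> path e x s -> path e' (f x) (map f s).
Proof. by move=> H; elim: s x => //= y s IH x /andP[h1 h2]; rewrite H //=; exact: IH. Qed.

Section Adj.
Variables r s t : nat.
Implicit Types (a : word r) (b : word s) (c : word t).

Lemma adj0 a b c d d' : d != d' -> e3c_adj (mkv a b c d) (mkv a b c d').
Proof. by move=> h; rewrite /e3c_adj /vA /vB /vC /vd /= !eqxx h. Qed.

Lemma adjC a b c c' : diff1 c c' -> e3c_adj (mkv a b c o0) (mkv a b c' o0).
Proof. by move=> h; rewrite /e3c_adj /vA /vB /vC /vd /= !eqxx h /= orbT. Qed.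

Lemma adjB a b b' c : diff1 b b' -> e3c_adj (mkv a b c o1) (mkv a b' c o1).
Proof. by move=> h; rewrite /e3c_adj /vA /vB /vC /vd /= !eqxx h /= !orbT. Qed.

Lemma adjA a a' b c : diff1 a a' -> e3c_adj (mkv a b c o2) (mkv a' b c o2).
Proof. by move=> h; rewrite /e3c_adj /vA /vB /vC /vd /= !eqxx h /= !orbT. Qed.

Lemma adj_sym (x y : e3c_vertex r s t) : e3c_adj x y = e3c_adj y x.
Proof.
rewrite /e3c_adj (eq_sym (vA x)) (eq_sym (vB x)) (eq_sym (vC x)) (eq_sym (vd x)).
rewrite (diff1C (vC x)) (diff1C (vB x)) (diff1C (vA x)).
move: (val (vd x) == 0) (val (vd y) == 0) (val (vd x) == 1) (val (vd y) == 1)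
  (val (vd x) == 2) (val (vd y) == 2) => [] [] [] [] [] [] //=.
Qed.

Lemma pathA a b c o (Y : word r) : uniq o ->
  path (@e3c_adj r s t) (mkv a b c o2) [seq mkv Z b c o2 | Z <- walk a Y o].
Proof. by move=> uo; apply: (@path_lift _ _ _ _ (fun Z => mkv Z b c o2)) (walk_path a Y uo) => ? ? /adjA. Qed.

Lemma pathC a b c o (Y : word t) : uniq o ->
  path (@e3c_adj r s t) (mkv a b c o0) [seq mkv a b Z o0 | Z <- walk c Y o].
Proof. by move=> uo; apply: (@path_lift _ _ _ _ (fun Z => mkv a b Z o0)) (walk_path c Y uo) => ? ? /adjC. Qed.

Lemma lastA a b c o (Y : word r) d : full o ->
  last (mkv a b c d) [seq mkv Z b c d | Z <- walk a Y o] = mkv Y b c d.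
Proof. by move=> fo; have := @last_map _ _ (fun Z => mkv Z b c d) (walk a Y o) a; rewrite /= walk_last. Qed.

Lemma lastC a b c o (Y : word t) d : full o ->
  last (mkv a b c d) [seq mkv a b Z d | Z <- walk c Y o] = mkv a b Y d.
Proof. by move=> fo; have := @last_map _ _ (fun Z => mkv a b Z d) (walk c Y o) c; rewrite /= walk_last. Qed.

End Adj.
Definition Good r s t (u v : e3c_vertex r s t) :=
  exists P : 'I_(2 * r + 2) -> seq (e3c_vertex r s t),
    (forall i, is_path u v (P i) /\ size (P i) <= r + t + 7) /\
    (forall i j, i != j -> int_disjoint u v (P i) (P j)).

Lemma rev_cons_belast (T : Type) (u : T) p : last u p :: rev (belast u p) = rev (u :: p).
Proof. by rewrite [u :: p]lastI rev_rcons. Qed.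

Lemma good_rev r s t (u v : e3c_vertex r s t) : Good u v -> Good v u.
Proof.
case=> P [HP HD]; exists (fun i => rev (belast u (P i))); split.
  move=> i; have [/and3P[hp /eqP hl hu] hs] := HP i; split; last by rewrite size_rev size_belast.
  apply/and3P; split.
  - rewrite -hl rev_path; apply: sub_path hp => x y; by rewrite adj_sym.
  - have := rev_cons_belast u (P i); rewrite hl; case: (P i) hl => [/= <-|y p _] //=.
    by rewrite rev_cons => e; move: (congr1 (last v) e); rewrite /= last_rcons.
  - by rewrite -hl rev_cons_belast rev_uniq.
move=> i j hij x; have [/and3P[_ /eqP hli _] _] := HP i; have [/and3P[_ /eqP hlj _] _] := HP j.
rewrite -{1}hli -{1}hlj !rev_cons_belast !mem_rev => hi hj.
by case: (HD i j hij x hi hj) => ->; [right|left].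
Qed.
Lemma mkv_eqE r s t (a a' : word r) (b b' : word s) (c c' : word t) d d' :
  (mkv a b c d == mkv a' b' c' d') = [&& a == a', b == b', c == c' & d == d'].
Proof.
apply/eqP/and4P => [/mkv_inj [-> -> -> ->]|[/eqP-> /eqP-> /eqP-> /eqP->]] //.
Qed.

Section Idx.
Variables r : nat.
Hypothesis hr : 0 < r.

Definition ii (k : 'I_(2 * r)) : 'I_r := Ordinal (ltn_pmod k hr).
Definition aa (k : 'I_(2 * r)) : 'I_3 := if r <= k then o2 else o1.

Lemma aa_neq0 k : aa k != o0.
Proof. by rewrite /aa; case: ifP. Qed.

Lemma idx_inj k k' : ii k = ii k' -> aa k = aa k' -> k = k'.
Proof.
move=> /(congr1 val) /= hi ha; apply: val_inj; move: ha; rewrite /aa /=.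
have hk := ltn_ord k; have hk' := ltn_ord k'.
case: (leqP r k) => h1; case: (leqP r k') => h2 // _.
- move: hi; rewrite -(subnK h1) -(subnK h2) !modnDr !modn_small; try lia.
- by move: hi; rewrite !modn_small.
Qed.

Lemma shk_inj m (w : word m) (f : 'I_r -> 'I_m) k k' : injective f ->
  sh w (f (ii k)) (aa k) = sh w (f (ii k')) (aa k') -> k = k'.
Proof.
move=> fi /(sh_inj (aa_neq0 k) (aa_neq0 k')) [/fi h1 h2]; exact: idx_inj.
Qed.

Definition kst : 'I_(2 * r) := Ordinal (leq_trans hr (leq_pmull r (isT : 0 < 2))).
End Idx.

Lemma widen_inj n m (h : n <= m) : injective (widen_ord h).
Proof. by move=> x y /(congr1 val) /= e; exact: val_inj. Qed.
Section Assemble.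
Variables r s t : nat.
Local Notation V := (e3c_vertex r s t).
Variables (u v : V) (main : 'I_(2 * r) -> seq V) (E1 E2 : seq V).
Variables (Sm : 'I_(2 * r) -> V -> Prop) (S1 S2 : V -> Prop).
Hypotheses (Hm : forall k, is_path u v (main k) /\ size (main k) <= r + t + 7)
  (H1 : is_path u v E1 /\ size E1 <= r + t + 7)
  (H2 : is_path u v E2 /\ size E2 <= r + t + 7)
  (Mm : forall k x, x \in u :: main k -> [\/ x = u, x = v | Sm k x])
  (M1 : forall x, x \in u :: E1 -> [\/ x = u, x = v | S1 x])
  (M2 : forall x, x \in u :: E2 -> [\/ x = u, x = v | S2 x])
  (Dmm : forall k k' x, k != k' -> Sm k x -> Sm k' x -> False)
  (Dm1 : forall k x, Sm k x -> S1 x -> False)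
  (Dm2 : forall k x, Sm k x -> S2 x -> False)
  (D12 : forall x, S1 x -> S2 x -> False).

Definition cls (k : 'I_(2 * r + 2)) : seq V :=
  if @insub _ (fun n => n < 2 * r) _ (val k) is Some k' then main k' else if val k == 2 * r then E1 else E2.

Let Sig (k : 'I_(2 * r + 2)) (x : V) : Prop :=
  if @insub _ (fun n => n < 2 * r) _ (val k) is Some k' then Sm k' x else if val k == 2 * r then S1 x else S2 x.

Lemma cls_mem k x : x \in u :: cls k -> [\/ x = u, x = v | Sig k x].
Proof.
rewrite /cls /Sig; case: insubP => [k' _ _|_]; first exact: Mm.
by case: ifP => _; [exact: M1 | exact: M2].
Qed.

Lemma assemble : Good u v.
Proof.
exists cls; split.
  move=> k; rewrite /cls; case: insubP => [k' _ _|_]; first exact: Hm.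
  by case: ifP.
move=> i j hij x hi hj.
case: (cls_mem hi) => [->|->|si]; [by left|by right|].
case: (cls_mem hj) => [->|->|sj]; [by left|by right|].
exfalso; move: si sj; rewrite /Sig.
have hi2 : val i < 2 * r + 2 := ltn_ord i; have hj2 : val j < 2 * r + 2 := ltn_ord j.
case: insubP => [ki hki eki|hki]; case: insubP => [kj hkj ekj|hkj].
- apply: Dmm; apply: contra hij => /eqP e; apply/eqP; apply: val_inj; by rewrite -eki -ekj e.
- by case: ifP => _ a b; [exact: Dm1 a b | exact: Dm2 a b].
- by case: ifP => _ a b; [exact: Dm1 b a | exact: Dm2 b a].
- have e1 : (val i == 2 * r) || (val i == (2 * r).+1) by move: hki hi2; move: (val i) => n; lia.
  have e2 : (val j == 2 * r) || (val j == (2 * r).+1) by move: hkj hj2; move: (val j) => n; lia.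
  case: (eqVneq (val i) (2 * r)) => ei; case: (eqVneq (val j) (2 * r)) => ej.
  + by case/eqP: hij; apply: val_inj; rewrite ei ej.
  + by move=> a b; exact: D12 a b.
  + by move=> a b; exact: D12 b a.
  + case/eqP: hij; apply: val_inj; move: e1 e2; rewrite (negbTE ei) (negbTE ej) /= => /eqP -> /eqP -> //.
Qed.
End Assemble.
#[global] Arguments walk : simpl never.
Lemma size_mapw (T : Type) n (f : word n -> T) X Y o : size [seq f Z | Z <- walk X Y o] = size (walk X Y o).
Proof. exact: size_map. Qed.
Lemma uniq_ofull n (o : seq 'I_n) : full o -> uniq o. Proof. by case. Qed.
Lemma neq_o02 : (o0 == o2) = false. Proof. by []. Qed.
Lemma neq_o01 : (o0 == o1) = false. Proof. by []. Qed.
Lemma neq_o12 : (o1 == o2) = false. Proof. by []. Qed.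
Lemma neq_o20 : (o2 == o0) = false. Proof. by []. Qed.
Lemma neq_o10 : (o1 == o0) = false. Proof. by []. Qed.
Lemma neq_o21 : (o2 == o1) = false. Proof. by []. Qed.

Lemma sh12 n (w : word n) i : sh w i o1 != sh w i o2.
Proof. by apply/eqP => /sh_inj [] // _ /(congr1 val). Qed.

Lemma memAE r s t (a : word r) b c d w b' c' d' :
  (mkv a b c d \in [seq @mkv r s t Z b' c' d' | Z <- w]) = [&& a \in w, b == b', c == c' & d == d'].
Proof.
apply/mapP/and4P => [[Z hZ /mkv_inj [-> -> -> ->]]|[h /eqP-> /eqP-> /eqP->]]; last by exists a.
by rewrite hZ !eqxx.
Qed.

Lemma memCE r s t (a : word r) b c d w a' b' d' :
  (mkv a b c d \in [seq @mkv r s t a' b' Z d' | Z <- w]) = [&& c \in w, a == a', b == b' & d == d'].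
Proof.
apply/mapP/and4P => [[Z hZ /mkv_inj [-> -> -> ->]]|[h /eqP-> /eqP-> /eqP->]]; last by exists c.
by rewrite hZ !eqxx.
Qed.

Lemma uniq_mapA r s t (w : seq (word r)) b c d : uniq w -> uniq [seq @mkv r s t Z b c d | Z <- w].
Proof. by move=> uw; rewrite map_inj_uniq // => x y /mkv_inj []. Qed.
Lemma uniq_mapC r s t (w : seq (word t)) a b d : uniq w -> uniq [seq @mkv r s t a b Z d | Z <- w].
Proof. by move=> uw; rewrite map_inj_uniq // => x y /mkv_inj []. Qed.

Lemma walk_uniq' n (X Y : word n) o : full o -> uniq (walk X Y o).
Proof. by move=> [uo _]; have := walk_uniq X Y uo; case/andP. Qed.
Lemma walk_notin n (X Y : word n) o : full o -> (X \in walk X Y o) = false.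
Proof. by move=> [uo _]; have := walk_uniq X Y uo; case/andP => /negbTE. Qed.

#[global] Hint Resolve full_last full_first full_all : core.
Lemma full_uniq n (o : seq 'I_n) : full o -> uniq o. Proof. by case. Qed.
#[global] Hint Resolve aa_neq0 : core.

Ltac dsolve := solve [ apply: diff1_sh; by [] | rewrite diff1C; apply: diff1_sh; by [] | by [] ].
Ltac adj_step := match goal with
  | |- is_true (e3c_adj (mkv ?a ?b ?c _) (mkv ?a ?b ?c _)) => apply: adj0; done
  | |- is_true (e3c_adj (mkv _ ?b ?c o2) (mkv _ ?b ?c o2)) => apply: adjA; dsolve
  | |- is_true (e3c_adj (mkv ?a _ ?c o1) (mkv ?a _ ?c o1)) => apply: adjB; dsolve
  | |- is_true (e3c_adj (mkv ?a ?b _ o0) (mkv ?a ?b _ o0)) => apply: adjC; dsolve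
  | |- is_true (path _ _ [seq mkv _ _ _ o2 | _ <- _]) => apply: pathA; apply: full_uniq; by []
  | |- is_true (path _ _ [seq mkv _ _ _ o0 | _ <- _]) => apply: pathC; apply: full_uniq; by []
  end.
Ltac path_solve := repeat (rewrite /= ?cat_path /= ?lastA ?lastC //);
  repeat (apply/andP; split); adj_step.

Lemma uniq_mapAw r s t (X Y : word r) o b c d : full o ->
  uniq [seq @mkv r s t Z b c d | Z <- walk X Y o].
Proof. by move=> fo; apply: uniq_mapA; exact: walk_uniq'. Qed.
Lemma uniq_mapCw r s t (X Y : word t) o a b d : full o ->
  uniq [seq @mkv r s t a b Z d | Z <- walk X Y o].
Proof. by move=> fo; apply: uniq_mapC; exact: walk_uniq'. Qed.
Lemma walk_notinA r s t (X Y : word r) o b c d : full o ->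
  (@mkv r s t X b c d \in [seq mkv Z b c d | Z <- walk X Y o]) = false.
Proof. by move=> fo; rewrite memAE walk_notin. Qed.
Lemma walk_notinC r s t (X Y : word t) o a b d : full o ->
  (@mkv r s t a b X d \in [seq mkv a b Z d | Z <- walk X Y o]) = false.
Proof. by move=> fo; rewrite memCE walk_notin. Qed.

Lemma hasAA r s t (w1 w2 : seq (word r)) b c d b' c' d' :
  has [in [seq @mkv r s t Z b c d | Z <- w1]] [seq mkv Z b' c' d' | Z <- w2] =
  [&& b' == b, c' == c, d' == d & has [in w1] w2].
Proof.
rewrite has_map; case: eqP => [->|nb]; case: eqP => [->|nc]; case: eqP => [->|nd] /=;
  try (apply/hasP => -[Z _]; rewrite /= memAE => /and4P[_ /eqP ? /eqP ? /eqP ?]; congruence).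
by apply: eq_has => Z; rewrite /= memAE !eqxx !andbT.
Qed.

Lemma hasCC r s t (w1 w2 : seq (word t)) a b d a' b' d' :
  has [in [seq @mkv r s t a b Z d | Z <- w1]] [seq mkv a' b' Z d' | Z <- w2] =
  [&& a' == a, b' == b, d' == d & has [in w1] w2].
Proof.
rewrite has_map; case: eqP => [->|nb]; case: eqP => [->|nc]; case: eqP => [->|nd] /=;
  try (apply/hasP => -[Z _]; rewrite /= memCE => /and4P[_ /eqP ? /eqP ? /eqP ?]; congruence).
by apply: eq_has => Z; rewrite /= memCE !eqxx !andbT.
Qed.

Lemma hasAC r s t (w1 : seq (word r)) (w2 : seq (word t)) b c d a' b' d' :
  has [in [seq @mkv r s t Z b c d | Z <- w1]] [seq mkv a' b' Z d' | Z <- w2] =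
  [&& a' \in w1, b' == b, c \in w2 & d' == d].
Proof.
rewrite has_map; apply/hasP/and4P => [[Z hZ]|[h1 /eqP-> h3 /eqP->]].
  by rewrite /= memAE => /and4P[-> -> /eqP eZ ->]; rewrite -eZ hZ.
by exists c => //=; rewrite memAE h1 !eqxx.
Qed.

Lemma hasCA r s t (w1 : seq (word t)) (w2 : seq (word r)) a b d b' c' d' :
  has [in [seq @mkv r s t a b Z d | Z <- w1]] [seq mkv Z b' c' d' | Z <- w2] =
  [&& a \in w2, b' == b, c' \in w1 & d' == d].
Proof.
rewrite has_map; apply/hasP/and4P => [[Z hZ]|[h1 /eqP-> h3 /eqP->]].
  by rewrite /= memCE => /and4P[-> /eqP eZ -> ->]; rewrite -eZ hZ.
by exists a => //=; rewrite memCE h3 !eqxx.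
Qed.

Lemma has_in_cons (T : eqType) (s1 : seq T) x s :
  has [in s1] (x :: s) = (x \in s1) || has [in s1] s.
Proof. by []. Qed.
Lemma has_in_nil (T : eqType) (s1 : seq T) : has [in s1] [::] = false.
Proof. by []. Qed.

Ltac uniq_norm := repeat progress rewrite ?cat_uniq ?cons_uniq ?mem_cat ?in_cons ?in_nil ?memAE ?memCE ?mkv_eqE
  ?has_cat ?has_in_cons ?has_in_nil ?hasAA ?hasCC ?hasAC ?hasCA.
Ltac o_norm := rewrite ?neq_o01 ?neq_o02 ?neq_o12 ?neq_o10 ?neq_o20 ?neq_o21 ?eqxx.

Ltac msplit :=
  repeat match goal with
  | |- is_true (_ || _) -> _ => case/orP
  | |- is_true (_ \in [::]) -> _ => by []
  | |- is_true (_ \in _ :: _) -> _ => rewrite in_cons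
  | |- is_true (_ \in _ ++ _) -> _ => rewrite mem_cat
  | |- is_true (_ == _) -> _ => move/eqP->
  | |- is_true (_ \in [seq _ | _ <- _]) -> _ =>
      let Z := fresh "Z" in let hZ := fresh "hZ" in case/mapP => Z hZ ->
  end.

Section Case21.
Variables r s t : nat.
Hypotheses (hr : 0 < r) (hrs : r <= s) (hst : s <= t).
Variables (A A' : word r) (B : word s) (C C' : word t).
Hypotheses (hA : A != A') (hC : C != C').
Local Notation V := (e3c_vertex r s t).

Let hrt := leq_trans hrs hst.
Let u : V := mkv A B C o2.
Let v : V := mkv A' B C' o1.
Let A1 k := sh A (ii hr k) (aa k).
Let BK k := sh B (widen_ord hrs (ii hr k)) (aa k).
Let BKs := BK (kst hr).
Let t0 : 'I_t := Ordinal (leq_trans hr hrt).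
Let Y := if sh C' t0 o1 != C then sh C' t0 o1 else sh C' t0 o2.

Lemma Y_neqC : Y != C.
Proof.
rewrite /Y; case: ifP => // /negbFE /eqP <-; by rewrite eq_sym sh12.
Qed.

Definition m21 k : seq V :=
  mkv (A1 k) B C o2 :: mkv (A1 k) B C o1 :: mkv (A1 k) (BK k) C o1 :: mkv (A1 k) (BK k) C o2
  :: [seq mkv Z (BK k) C o2 | Z <- walk (A1 k) A' (olast (ii hr k))]
  ++ mkv A' (BK k) C o0 :: [seq mkv A' (BK k) W o0 | W <- walk C C' (oall t)]
  ++ [:: mkv A' (BK k) C' o1; v].

Lemma Y_diff : diff1 Y C'.
Proof. by rewrite /Y; case: ifP => _; rewrite diff1C; apply: diff1_sh. Qed.
Lemma Y_neqC' : Y != C'.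
Proof. by rewrite /Y; case: ifP => _; apply: sh_neq. Qed.

Lemma A1_inj k k' : A1 k = A1 k' -> k = k'.
Proof. by move/(@shk_inj r hr r A id k k'); apply. Qed.
Lemma BK_inj k k' : BK k = BK k' -> k = k'.
Proof. by move/(@shk_inj r hr s B (widen_ord hrs) k k'); apply; exact: widen_inj. Qed.
Lemma A1_neq k : (A1 k == A) = false.
Proof. by apply/negbTE/sh_neq. Qed.
Lemma BK_neq k : (BK k == B) = false.
Proof. by apply/negbTE/sh_neq. Qed.

Lemma Z_neqA k Z : Z \in walk (A1 k) A' (olast (ii hr k)) -> Z != A.
Proof.
move=> hZ; case: (eqVneq Z A') => [->|hZ']; first by rewrite eq_sym.
have := walk_lastp hZ hZ'; rewrite /A1 ffunE eqxx => e.
apply/eqP => eZ; move: (add3_neq (A (ii hr k)) (aa_neq0 k)); by rewrite -e eZ eqxx.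
Qed.

Lemma m21_path k : is_path u v (m21 k).
Proof.
apply/and3P; split.
- rewrite /m21 /u /v /A1 /BK; repeat (rewrite /= ?cat_path /= ?lastA ?lastC //).
  by repeat (apply/andP; split) => //; try adj_step.
- by rewrite /m21; do 6 rewrite ?last_cat /=.
- have F1 := A1_neq k; have F2 := BK_neq k.
  have F3 := negbTE hC; have F4 := negbTE hA.
  rewrite /m21 /u /v; uniq_norm; o_norm.
  rewrite ?F1 ?F2 ?F3 ?F4 ?(eq_sym A) ?(eq_sym B) ?(eq_sym C) ?F1 ?F2 ?F3 ?F4 ?walk_notin ?uniq_mapAw ?uniq_mapCw ?andbF ?andFb ?orbF ?orFb.
  all: by [].
Qed.

Lemma m21_size k : size (m21 k) <= r + t + 7.
Proof.
rewrite /m21 /= !size_cat /= !size_mapw /= !size_cat /= !size_mapw /=.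
have := walk_size (A1 k) A' (full_last (ii hr k)); have := walk_size C C' (full_all t).
lia.
Qed.

Definition E1_21 : seq V :=
  mkv A B C o1 :: mkv A BKs C o1 :: mkv A BKs C o0 :: [seq mkv A BKs W o0 | W <- walk C C' (oall t)]
  ++ mkv A BKs C' o1 :: mkv A B C' o1 :: mkv A B C' o2 :: [seq mkv Z B C' o2 | Z <- walk A A' (oall r)]
  ++ [:: v].

Definition E2_21 : seq V :=
  mkv A B C o0 :: [seq mkv A B W o0 | W <- walk C Y (oall t)]
  ++ mkv A B Y o2 :: [seq mkv Z B Y o2 | Z <- walk A A' (oall r)]
  ++ [:: mkv A' B Y o0; mkv A' B C' o0; v].

Lemma E1_21_path : is_path u v E1_21 /\ size E1_21 <= r + t + 7.
Proof.
split; last first.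
  rewrite /E1_21 /= !size_cat /= !size_mapw /= !size_cat /= !size_mapw /=.
  have := walk_size A A' (full_all r); have := walk_size C C' (full_all t); lia.
apply/and3P; split.
- rewrite /E1_21 /u /v /BKs /BK; repeat (rewrite /= ?cat_path /= ?lastA ?lastC //).
  by repeat (apply/andP; split) => //; try adj_step.
- by rewrite /E1_21; do 6 rewrite ?last_cat /=.
- have F2 : (BKs == B) = false by apply: BK_neq.
  have F3 := negbTE hC; have F4 := negbTE hA.
  rewrite /E1_21 /u /v; uniq_norm; o_norm.
  rewrite ?F2 ?F3 ?F4 ?(eq_sym A) ?(eq_sym B) ?(eq_sym C) ?F2 ?F3 ?F4 ?walk_notin ?uniq_mapAw ?uniq_mapCw ?andbF ?andFb ?orbF ?orFb.
  all: by [].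
Qed.

Lemma E2_21_path : is_path u v E2_21 /\ size E2_21 <= r + t + 7.
Proof.
split; last first.
  rewrite /E2_21 /= !size_cat /= !size_mapw /= !size_cat /= !size_mapw /=.
  have := walk_size A A' (full_all r); have := walk_size C Y (full_all t); lia.
have hY := Y_diff.
apply/and3P; split.
- rewrite /E2_21 /u /v; repeat (rewrite /= ?cat_path /= ?lastA ?lastC //).
  by repeat (apply/andP; split) => //; try adj_step.
- by rewrite /E2_21; do 6 rewrite ?last_cat /=.
- have F3 := negbTE hC; have F4 := negbTE hA.
  have F5 := negbTE Y_neqC; have F6 := negbTE Y_neqC'.
  have F7 : (A' == A) = false by rewrite eq_sym.
  rewrite /E2_21 /u /v; uniq_norm; o_norm.
  rewrite ?F3 ?F4 ?F5 ?F6 ?F7 ?(eq_sym C) ?(eq_sym C') ?F3 ?F4 ?F5 ?F6 ?walk_notin ?uniq_mapAw ?uniq_mapCw ?andbF ?andFb ?orbF ?orFb.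
  all: by [].
Qed.

Definition Sig21 k (x : V) : bool :=
  [&& vB x == B, vA x == A1 k, vC x == C & vd x != o0] || ((vB x == BK k) && (vA x != A)).
Definition S1_21 (x : V) : bool :=
  [|| (vB x == BKs) && (vA x == A), [&& vB x == B, vd x == o1 & vA x == A]
   | [&& vB x == B, vd x == o2 & vC x == C']].
Definition S2_21 (x : V) : bool :=
  (vB x == B) && ((vd x == o0) || ((vd x == o2) && (vC x == Y))).

Lemma m21_mem k x : x \in u :: m21 k -> [\/ x = u, x = v | Sig21 k x].
Proof.
have F7 : (A' == A) = false by rewrite eq_sym (negbTE hA).
rewrite /m21; msplit; try (by constructor 1); try (by constructor 2); constructor 3;
  rewrite /Sig21 /vA /vB /vC /vd /= ?eqxx ?A1_neq ?F7 /= ?orbT //.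
by rewrite (Z_neqA hZ) orbT.
Qed.

Lemma E1_21_mem x : x \in u :: E1_21 -> [\/ x = u, x = v | S1_21 x].
Proof.
rewrite /E1_21; msplit; try (by constructor 1); try (by constructor 2); constructor 3;
  rewrite /S1_21 /vA /vB /vC /vd /= ?eqxx /= ?orbT //.
Qed.

Lemma E2_21_mem x : x \in u :: E2_21 -> [\/ x = u, x = v | S2_21 x].
Proof.
rewrite /E2_21; msplit; try (by constructor 1); try (by constructor 2); constructor 3;
  rewrite /S2_21 /vA /vB /vC /vd /= ?eqxx /= ?orbT //.
Qed.

Lemma good21 : Good u v.
Proof.
apply: (@assemble r s t u v m21 E1_21 E2_21 (fun k x => Sig21 k x) (fun x => S1_21 x) (fun x => S2_21 x)).
- by move=> k; split; [exact: m21_path | exact: m21_size].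
- exact: E1_21_path.
- exact: E2_21_path.
- exact: m21_mem.
- exact: E1_21_mem.
- exact: E2_21_mem.
- move=> k k' x nk; rewrite /Sig21.
  case/orP => [/and4P[/eqP b1 /eqP a1 _ _]|/andP[/eqP b1 _]];
  case/orP => [/and4P[/eqP b2 /eqP a2 _ _]|/andP[/eqP b2 _]].
  + by move/eqP: nk; apply; apply: A1_inj; rewrite -a1 -a2.
  + by move: (BK_neq k'); rewrite -b2 b1 eqxx.
  + by move: (BK_neq k); rewrite -b1 b2 eqxx.
  + by move/eqP: nk; apply; apply: BK_inj; rewrite -b1 -b2.
- move=> k x; rewrite /Sig21 /S1_21.
  case/orP => [/and4P[/eqP b1 /eqP a1 /eqP c1 _]|/andP[/eqP b1 /negbTE a1]].
  + by rewrite b1 a1 c1 A1_neq (negbTE hC) !andbF.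
  + by rewrite b1 a1 BK_neq !andbF.
- move=> k x; rewrite /Sig21 /S2_21.
  case/orP => [/and4P[/eqP b1 /eqP a1 /eqP c1 /negbTE d1]|/andP[/eqP b1 _]].
  + by rewrite b1 c1 d1 (eq_sym C) (negbTE Y_neqC) eqxx !andbF.
  + by rewrite b1 BK_neq.
- move=> x; rewrite /S1_21 /S2_21.
  case/or3P => [/andP[/eqP b1 _]|/and3P[_ /eqP d1 _]|/and3P[_ /eqP d1 /eqP c1]].
  + by rewrite b1 /BKs BK_neq.
  + by rewrite d1; o_norm; rewrite andbF.
  + by rewrite d1 c1 (eq_sym C') (negbTE Y_neqC'); o_norm; rewrite !andbF.
Qed.

End Case21.
Ltac bdestr0 xa xb xc xd := repeat match goal with
 | H : is_true (_ && _) |- _ => case/andP: H => ? ?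
 | H : is_true (_ || _) |- _ => case/orP: H => ?
 | H : is_true (?a == _) |- _ =>
     first [ constr_eq a xa; move/eqP: H => H; subst xa
           | constr_eq a xb; move/eqP: H => H; subst xb
           | constr_eq a xc; move/eqP: H => H; subst xc
           | constr_eq a xd; move/eqP: H => H; subst xd ]
 end.
Ltac brevert := repeat match goal with H : is_true _ |- _ => move: H end.
Ltac xdestr x := let xa := fresh "xa" in let xb := fresh "xb" in let xc := fresh "xc" in let xd := fresh "xd" in
  case: x => [[[xa xb] xc] xd]; rewrite /vA /vB /vC /vd /=; move=> ? ?; bdestr0 xa xb xc xd.

Section Case01.
Variables r s t : nat.
Hypotheses (hr : 0 < r) (hrs : r <= s) (hst : s <= t).
Variables (A A' : word r) (B : word s) (C C' : word t).
Hypotheses (hA : A != A') (hC : C != C').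
Local Notation V := (e3c_vertex r s t).

Let hrt := leq_trans hrs hst.
Let u : V := mkv A B C o0.
Let v : V := mkv A' B C' o1.
Let C1 k := sh C (widen_ord hrt (ii hr k)) (aa k).
Let BK k := sh B (widen_ord hrs (ii hr k)) (aa k).
Let BKs := BK (kst hr).

Lemma C1_inj' k k' : C1 k = C1 k' -> k = k'.
Proof. by move/(@shk_inj r hr t C (widen_ord hrt) k k'); apply; exact: widen_inj. Qed.
Lemma BK_inj' k k' : BK k = BK k' -> k = k'.
Proof. by move/(@shk_inj r hr s B (widen_ord hrs) k k'); apply; exact: widen_inj. Qed.
Lemma C1_neq k : (C1 k == C) = false.
Proof. by apply/negbTE/sh_neq. Qed.
Lemma BK_neq' k : (BK k == B) = false.
Proof. by apply/negbTE/sh_neq. Qed.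

Definition g01 k : seq V :=
  mkv A B (C1 k) o0 :: mkv A B (C1 k) o1 :: mkv A (BK k) (C1 k) o1 :: mkv A (BK k) (C1 k) o2
  :: [seq mkv Z (BK k) (C1 k) o2 | Z <- walk A A' (oall r)]
  ++ mkv A' (BK k) (C1 k) o0 :: [seq mkv A' (BK k) W o0 | W <- walk (C1 k) C' (oall t)]
  ++ [:: mkv A' (BK k) C' o1; v].

Definition d01 : seq V :=
  mkv A B C' o0 :: mkv A B C' o2 :: [seq mkv Z B C' o2 | Z <- walk A A' (oall r)] ++ [:: v].

Definition m01 k : seq V := if C1 k == C' then d01 else g01 k.

Definition E1_01 : seq V :=
  mkv A B C o2 :: [seq mkv Z B C o2 | Z <- walk A A' (oall r)]
  ++ mkv A' B C o0 :: [seq mkv A' B W o0 | W <- walk C C' (oall t)] ++ [:: v].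

Definition E2d (b0 : word s) : seq V :=
  mkv A B C o1 :: mkv A b0 C o1 :: mkv A b0 C o2 :: [seq mkv Z b0 C o2 | Z <- walk A A' (oall r)]
  ++ mkv A' b0 C o0 :: [seq mkv A' b0 W o0 | W <- walk C C' (oall t)] ++ [:: mkv A' b0 C' o1; v].

Definition E2n : seq V :=
  mkv A B C o1 :: mkv A BKs C o1 :: mkv A BKs C o0 :: [seq mkv A BKs W o0 | W <- walk C C' (oall t)]
  ++ mkv A BKs C' o1 :: mkv A B C' o1 :: mkv A B C' o2 :: [seq mkv Z B C' o2 | Z <- walk A A' (oall r)]
  ++ [:: v].

Definition E2_01 : seq V :=
  if [pick k | C1 k == C'] is Some k0 then E2d (BK k0) else E2n.

Lemma F7' : (A' == A) = false. Proof. by rewrite eq_sym (negbTE hA). Qed.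
Lemma F8' : (C' == C) = false. Proof. by rewrite eq_sym (negbTE hC). Qed.

Lemma g01_path k : C1 k != C' -> is_path u v (g01 k) /\ size (g01 k) <= r + t + 7.
Proof.
move=> hk; split; last first.
  rewrite /g01 /= !size_cat /= !size_mapw /= !size_cat /= !size_mapw /=.
  have := walk_size A A' (full_all r); have := walk_size (C1 k) C' (full_all t); lia.
apply/and3P; split.
- rewrite /g01 /u /v /C1 /BK; repeat (rewrite /= ?cat_path /= ?lastA ?lastC //).
  by repeat (apply/andP; split) => //; try adj_step.
- by rewrite /g01; do 6 rewrite ?last_cat /=.
- have F1 := C1_neq k; have F2 := BK_neq' k; have F3 := negbTE hk.
  have F4 := negbTE hA; have F5 := negbTE hC; have F6 := F7'; have F9 := F8'.
  have F10 : (C == C1 k) = false by rewrite eq_sym.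
  have F11 : (B == BK k) = false by rewrite eq_sym.
  have F12 : (C' == C1 k) = false by rewrite eq_sym.
  rewrite /g01 /u /v; uniq_norm; o_norm.
  rewrite ?F1 ?F2 ?F3 ?F4 ?F5 ?F6 ?F9 ?F10 ?F11 ?F12 ?walk_notin ?uniq_mapAw ?uniq_mapCw ?andbF ?andFb ?orbF ?orFb.
  all: by [].
Qed.

Lemma d01_path k : C1 k = C' -> is_path u v d01 /\ size d01 <= r + t + 7.
Proof.
move=> hk; have hd : diff1 C C' by rewrite -hk; apply: diff1_sh.
split; last first.
  rewrite /d01 /= !size_cat /= !size_mapw /=.
  have := walk_size A A' (full_all r); lia.
apply/and3P; split.
- rewrite /d01 /u /v; repeat (rewrite /= ?cat_path /= ?lastA ?lastC //).
  by repeat (apply/andP; split) => //; try adj_step.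
- by rewrite /d01; do 6 rewrite ?last_cat /=.
- have F4 := negbTE hA; have F5 := negbTE hC; have F6 := F7'; have F9 := F8'.
  rewrite /d01 /u /v; uniq_norm; o_norm.
  rewrite ?F4 ?F5 ?F6 ?F9 ?walk_notin ?uniq_mapAw ?uniq_mapCw ?andbF ?andFb ?orbF ?orFb.
  all: by [].
Qed.

Lemma m01_path k : is_path u v (m01 k) /\ size (m01 k) <= r + t + 7.
Proof. rewrite /m01; case: ifP => [/eqP h|/negbT h]; [exact: d01_path h | exact: g01_path]. Qed.

Lemma E1_01_path : is_path u v E1_01 /\ size E1_01 <= r + t + 7.
Proof.
split; last first.
  rewrite /E1_01 /= !size_cat /= !size_mapw /= !size_cat /= !size_mapw /=.
  have := walk_size A A' (full_all r); have := walk_size C C' (full_all t); lia.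
apply/and3P; split.
- rewrite /E1_01 /u /v; repeat (rewrite /= ?cat_path /= ?lastA ?lastC //).
  by repeat (apply/andP; split) => //; try adj_step.
- by rewrite /E1_01; do 6 rewrite ?last_cat /=.
- have F4 := negbTE hA; have F5 := negbTE hC; have F6 := F7'; have F9 := F8'.
  rewrite /E1_01 /u /v; uniq_norm; o_norm.
  rewrite ?F4 ?F5 ?F6 ?F9 ?walk_notin ?uniq_mapAw ?uniq_mapCw ?andbF ?andFb ?orbF ?orFb.
  all: by [].
Qed.

Lemma E2d_path k : is_path u v (E2d (BK k)) /\ size (E2d (BK k)) <= r + t + 7.
Proof.
split; last first.
  rewrite /E2d /= !size_cat /= !size_mapw /= !size_cat /= !size_mapw /=.
  have := walk_size A A' (full_all r); have := walk_size C C' (full_all t); lia.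
apply/and3P; split.
- rewrite /E2d /u /v /BK; repeat (rewrite /= ?cat_path /= ?lastA ?lastC //).
  by repeat (apply/andP; split) => //; try adj_step.
- by rewrite /E2d; do 6 rewrite ?last_cat /=.
- have F2 := BK_neq' k; have F11 : (B == BK k) = false by rewrite eq_sym.
  have F4 := negbTE hA; have F5 := negbTE hC; have F6 := F7'; have F9 := F8'.
  rewrite /E2d /u /v; uniq_norm; o_norm.
  rewrite ?F2 ?F11 ?F4 ?F5 ?F6 ?F9 ?walk_notin ?uniq_mapAw ?uniq_mapCw ?andbF ?andFb ?orbF ?orFb.
  all: by [].
Qed.

Lemma E2n_path : is_path u v E2n /\ size E2n <= r + t + 7.
Proof.
split; last first.
  rewrite /E2n /= !size_cat /= !size_mapw /= !size_cat /= !size_mapw /=.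
  have := walk_size A A' (full_all r); have := walk_size C C' (full_all t); lia.
apply/and3P; split.
- rewrite /E2n /u /v /BKs /BK; repeat (rewrite /= ?cat_path /= ?lastA ?lastC //).
  by repeat (apply/andP; split) => //; try adj_step.
- by rewrite /E2n; do 6 rewrite ?last_cat /=.
- have F2 : (BKs == B) = false by apply: BK_neq'.
  have F11 : (B == BKs) = false by rewrite eq_sym.
  have F4 := negbTE hA; have F5 := negbTE hC; have F6 := F7'; have F9 := F8'.
  rewrite /E2n /u /v; uniq_norm; o_norm.
  rewrite ?F2 ?F11 ?F4 ?F5 ?F6 ?F9 ?walk_notin ?uniq_mapAw ?uniq_mapCw ?andbF ?andFb ?orbF ?orFb.
  all: by [].
Qed.

Lemma E2_01_path : is_path u v E2_01 /\ size E2_01 <= r + t + 7.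
Proof. rewrite /E2_01; case: pickP => [k0 _|_]; [exact: E2d_path | exact: E2n_path]. Qed.

Lemma C1_eqE k k' : (C1 k == C1 k') = (k == k').
Proof. by apply/eqP/eqP => [/C1_inj'|->]. Qed.
Lemma BK_eqE k k' : (BK k == BK k') = (k == k').
Proof. by apply/eqP/eqP => [/BK_inj'|->]. Qed.
Lemma C1_neqs k : (C == C1 k) = false. Proof. by rewrite eq_sym C1_neq. Qed.
Lemma BK_neqs k : (B == BK k) = false. Proof. by rewrite eq_sym BK_neq'. Qed.

Definition SM01 k (x : V) : bool :=
  if C1 k == C' then [&& vB x == B, vC x == C' & ((vd x == o0) && (vA x == A)) || (vd x == o2)]
  else [&& vB x == B, vA x == A, vC x == C1 k & vd x != o2]
       || ((vB x == BK k) && ((vA x != A) || (vC x == C1 k) && (vd x != o0))).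
Definition S1_01 (x : V) : bool :=
  (vB x == B) && (((vd x == o2) && (vC x == C)) || ((vd x == o0) && (vA x == A'))).
Definition S2_01 (x : V) : bool :=
  if [pick k | C1 k == C'] is Some k0 then
    [&& vB x == B, vA x == A, vC x == C & vd x == o1] || (vB x == BK k0)
  else [|| [&& vB x == BKs, vA x == A & (vd x == o0) || (vd x == o1) && ((vC x == C) || (vC x == C'))],
           [&& vB x == B, vA x == A, vd x == o1 & (vC x == C) || (vC x == C')]
         | [&& vB x == B, vd x == o2 & vC x == C']].

Lemma m01_mem k x : x \in u :: m01 k -> [\/ x = u, x = v | SM01 k x].
Proof.
have F7 := F7'; have F1 := C1_neq k.
rewrite /m01 /SM01; case: ifP => hk.
  rewrite /d01; msplit; try (by constructor 1); try (by constructor 2); constructor 3;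
    rewrite /vA /vB /vC /vd /= ?eqxx /= ?orbT //.
rewrite /g01; msplit; try (by constructor 1); try (by constructor 2); constructor 3;
  rewrite /vA /vB /vC /vd /= ?eqxx ?F7 ?F1 /= ?orbT //.
Qed.

Lemma E1_01_mem x : x \in u :: E1_01 -> [\/ x = u, x = v | S1_01 x].
Proof.
rewrite /E1_01; msplit; try (by constructor 1); try (by constructor 2); constructor 3;
  rewrite /S1_01 /vA /vB /vC /vd /= ?eqxx /= ?orbT //.
Qed.

Lemma E2_01_mem x : x \in u :: E2_01 -> [\/ x = u, x = v | S2_01 x].
Proof.
rewrite /E2_01 /S2_01; case: pickP => [k0 _|_].
  rewrite /E2d; msplit; try (by constructor 1); try (by constructor 2); constructor 3;
    rewrite /vA /vB /vC /vd /= ?eqxx /= ?orbT //.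
rewrite /E2n; msplit; try (by constructor 1); try (by constructor 2); constructor 3;
  rewrite /vA /vB /vC /vd /= ?eqxx /= ?orbT //.
Qed.

Ltac rwh := try (match goal with hh : (_ == ?b) = _ |- _ => first [rewrite hh | rewrite (eq_sym b) hh] end).
Ltac rwn := try (match goal with hh : is_true (~~ (_ == _)) |- _ => rewrite (negbTE hh) end).
Ltac fin01 := match goal with H : is_true _ |- _ => move: H; rwh; rwh; rwh;
  rewrite ?C1_eqE ?BK_eqE; rwn; rwn; rwn;
  rewrite ?C1_eqE ?BK_eqE ?C1_neq ?C1_neqs ?BK_neq' ?BK_neqs ?F7' ?F8' ?(negbTE hA) ?(negbTE hC) ?eqxx;
  o_norm; rewrite ?andbF ?andFb ?orbF ?orFb; by [] end.

Lemma good01 : Good u v.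
Proof.
apply: (@assemble r s t u v m01 E1_01 E2_01 (fun k x => SM01 k x) (fun x => S1_01 x) (fun x => S2_01 x)).
- exact: m01_path.
- exact: E1_01_path.
- exact: E2_01_path.
- exact: m01_mem.
- exact: E1_01_mem.
- exact: E2_01_mem.
- move=> k k' x nk; rewrite /SM01; case: ifP => h1; case: ifP => h2.
  + by move: h1 h2 => /eqP <-; rewrite C1_eqE => /eqP e; rewrite e eqxx in nk.
  + xdestr x; fin01.
  + xdestr x; fin01.
  + xdestr x; fin01.
- move=> k x; rewrite /SM01 /S1_01; case: ifP => h1; xdestr x; fin01.
- move=> k x; rewrite /SM01 /S2_01; case: pickP => [k0 h0|h0]; case: ifP => h1.
  + by xdestr x; fin01.
  + have nk : k != k0 by apply/eqP => e; move: h1; rewrite e h0.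
    by xdestr x; fin01.
  + by move: (h0 k); rewrite /= h1.
  + by xdestr x; fin01.
- move=> x; rewrite /S1_01 /S2_01; case: pickP => [k0 h0|h0]; xdestr x; fin01.
Qed.

End Case01.
Ltac rwh := try (match goal with hh : (_ == ?b) = _ |- _ => first [rewrite hh | rewrite (eq_sym b) hh] end).
Ltac rwn := try (match goal with hh : is_true (~~ (_ == _)) |- _ => rewrite (negbTE hh) end).

Section Case20.
Variables r s t : nat.
Hypotheses (hr : 0 < r) (hrs : r <= s) (hst : s <= t).
Variables (A A' : word r) (B : word s) (C C' : word t).
Hypotheses (hA : A != A') (hC : C != C').
Local Notation V := (e3c_vertex r s t).

Let hrt := leq_trans hrs hst.
Let u : V := mkv A B C o2.
Let v : V := mkv A' B C' o0.
Let A1 k := sh A (ii hr k) (aa k).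
Let Kd k := sh C' (widen_ord hrt (ii hr k)) (aa k).
Let B1 := sh B (widen_ord hrs (ii hr (kst hr))) o1.

Definition sg : {perm 'I_(2 * r)} :=
  match [pick j | A1 j == A'], [pick j | Kd j == C] with
  | Some k0, Some kc => tperm k0 kc
  | _, _ => 1%g
  end.
Let K k := Kd (sg k).
Let pk k := widen_ord hrt (ii hr (sg k)).

Lemma A1_inj2 k k' : A1 k = A1 k' -> k = k'.
Proof. by move/(@shk_inj r hr r A id k k'); apply. Qed.
Lemma Kd_inj k k' : Kd k = Kd k' -> k = k'.
Proof. by move/(@shk_inj r hr t C' (widen_ord hrt) k k'); apply; exact: widen_inj. Qed.
Lemma K_inj k k' : K k = K k' -> k = k'.
Proof. by move/Kd_inj/perm_inj. Qed.
Lemma A1_eqE2 k k' : (A1 k == A1 k') = (k == k').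
Proof. by apply/eqP/eqP => [/A1_inj2|->]. Qed.
Lemma K_eqE k k' : (K k == K k') = (k == k').
Proof. by apply/eqP/eqP => [/K_inj|->]. Qed.
Lemma A1_neq2 k : (A1 k == A) = false. Proof. by apply/negbTE/sh_neq. Qed.
Lemma A1_neq2s k : (A == A1 k) = false. Proof. by rewrite eq_sym A1_neq2. Qed.
Lemma K_neq k : (K k == C') = false. Proof. by apply/negbTE/sh_neq. Qed.
Lemma K_neqs k : (C' == K k) = false. Proof. by rewrite eq_sym K_neq. Qed.
Lemma K_diff k : diff1 (K k) C'. Proof. by rewrite diff1C; apply: diff1_sh. Qed.
Lemma B1_neq : (B1 == B) = false. Proof. by apply/negbTE/sh_neq. Qed.
Lemma B1_neqs : (B == B1) = false. Proof. by rewrite eq_sym B1_neq. Qed.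

Lemma twist k : A1 k = A' -> (exists j, Kd j = C) -> K k = C.
Proof.
move=> hk [j hj]; rewrite /K /sg.
case: pickP => [k0 /eqP h0|h0]; last by move: (h0 k); rewrite /= hk eqxx.
case: pickP => [kc /eqP hc|hc]; last by move: (hc j); rewrite /= hj eqxx.
have -> : k = k0 by apply: A1_inj2; rewrite hk h0.
by rewrite tpermL.
Qed.

Lemma Kp_inj k k' : K k' (pk k) = K k (pk k) -> k = k'.
Proof.
rewrite /K /pk /Kd !ffunE eqxx => e; apply: (@perm_inj _ sg).
case: (eqVneq (widen_ord hrt (ii hr (sg k))) (widen_ord hrt (ii hr (sg k')))) => [ew|nw].
  rewrite ew eqxx in e; move/add3_inj: e => ea.
  apply: idx_inj => //; exact: (@widen_inj _ _ hrt _ _ ew).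
by move: e; rewrite (negbTE nw) => /esym/eqP; rewrite (negbTE (add3_neq _ _)).
Qed.

Lemma A1p_inj k k' : A1 k' (ii hr k) = A1 k (ii hr k) -> k = k'.
Proof.
rewrite /A1 !ffunE eqxx => e.
case: (eqVneq (ii hr k) (ii hr k')) => [ew|nw].
  rewrite ew eqxx in e; move/add3_inj: e => ea; by apply: idx_inj.
by move: e; rewrite (negbTE nw) => /esym/eqP; rewrite (negbTE (add3_neq _ _)).
Qed.

Definition dA20 k : seq V :=
  mkv A' B C o2 :: mkv A' B C o0 :: [seq mkv A' B W o0 | W <- walk C (K k) (ofirst (pk k))] ++ [:: v].
Definition gA20 k : seq V :=
  mkv (A1 k) B C o2 :: [seq mkv Z B C o2 | Z <- walk (A1 k) A' (olast (ii hr k))] ++ [:: mkv A' B C o0; v].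
Definition gB20 k : seq V :=
  mkv (A1 k) B C o2 :: mkv (A1 k) B C o0 :: [seq mkv (A1 k) B W o0 | W <- walk C (K k) (oall t)]
  ++ mkv (A1 k) B (K k) o2 :: [seq mkv Z B (K k) o2 | Z <- walk (A1 k) A' (olast (ii hr k))]
  ++ [:: mkv A' B (K k) o0; v].
Definition m20 k : seq V :=
  if A1 k == A' then dA20 k else if K k == C then gA20 k else gB20 k.

Definition E1_20 : seq V :=
  mkv A B C o1 :: mkv A B1 C o1 :: mkv A B1 C o2 :: [seq mkv Z B1 C o2 | Z <- walk A A' (oall r)]
  ++ mkv A' B1 C o0 :: [seq mkv A' B1 W o0 | W <- walk C C' (oall t)]
  ++ [:: mkv A' B1 C' o1; mkv A' B C' o1; v].
Definition E2_20 : seq V :=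
  mkv A B C o0 :: [seq mkv A B W o0 | W <- walk C C' (oall t)]
  ++ mkv A B C' o2 :: [seq mkv Z B C' o2 | Z <- walk A A' (oall r)] ++ [:: v].

Lemma F7'' : (A' == A) = false. Proof. by rewrite eq_sym (negbTE hA). Qed.
Lemma F8'' : (C' == C) = false. Proof. by rewrite eq_sym (negbTE hC). Qed.

Lemma walkA_notin k : (A \in walk (A1 k) A' (olast (ii hr k))) = false.
Proof.
apply/negbTE/negP => hZ; case: (eqVneq A A') => [e|ne]; first by move: hA; rewrite e eqxx.
have := walk_lastp hZ ne; rewrite /A1 ffunE eqxx => e.
by move: (add3_neq (A (ii hr k)) (aa_neq0 k)); rewrite -e eqxx.
Qed.

Lemma walkC'_notin k : (C' \in walk C (K k) (ofirst (pk k))) = false.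
Proof.
apply/negbTE/negP => /walk_first; rewrite /K /pk /Kd ffunE eqxx => e.
by move: (add3_neq (C' (widen_ord hrt (ii hr (sg k)))) (aa_neq0 (sg k))); rewrite -e eqxx.
Qed.

Lemma dA20_path k : A1 k = A' -> is_path u v (dA20 k) /\ size (dA20 k) <= r + t + 7.
Proof.
move=> hk; split; last first.
  rewrite /dA20 /= !size_cat /= !size_mapw /=.
  have := walk_size C (K k) (full_first (pk k)); lia.
have hd := K_diff k.
have hd2 : diff1 A A' by rewrite -hk; apply: diff1_sh.
apply/and3P; split.
- rewrite /dA20 /u /v; repeat (rewrite /= ?cat_path /= ?lastA ?lastC //).
  by repeat (apply/andP; split) => //; try adj_step.
- by rewrite /dA20; do 6 rewrite ?last_cat /=.
- have F4 := negbTE hA; have F5 := negbTE hC; have F6 := F7''; have F9 := F8''.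
  have F10 := walkC'_notin k.
  rewrite /dA20 /u /v; uniq_norm; o_norm.
  rewrite ?F4 ?F5 ?F6 ?F9 ?F10 ?walk_notin ?uniq_mapAw ?uniq_mapCw ?andbF ?andFb ?orbF ?orFb.
  all: by [].
Qed.

Lemma gA20_path k : K k = C -> is_path u v (gA20 k) /\ size (gA20 k) <= r + t + 7.
Proof.
move=> hK; split; last first.
  rewrite /gA20 /= !size_cat /= !size_mapw /=.
  have := walk_size (A1 k) A' (full_last (ii hr k)); lia.
have hd : diff1 C C' by rewrite -hK; exact: K_diff.
apply/and3P; split.
- rewrite /gA20 /u /v /A1; repeat (rewrite /= ?cat_path /= ?lastA ?lastC //).
  by repeat (apply/andP; split) => //; try adj_step.
- by rewrite /gA20; do 6 rewrite ?last_cat /=.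
- have F4 := negbTE hA; have F5 := negbTE hC; have F6 := F7''; have F9 := F8''.
  have F1 := A1_neq2 k; have F2 := A1_neq2s k; have F3 := walkA_notin k.
  rewrite /gA20 /u /v; uniq_norm; o_norm.
  rewrite ?F1 ?F2 ?F3 ?F4 ?F5 ?F6 ?F9 ?walk_notin ?uniq_mapAw ?uniq_mapCw ?andbF ?andFb ?orbF ?orFb.
  all: by [].
Qed.

Lemma gB20_path k : (A1 k == A') = false -> (K k == C) = false ->
  is_path u v (gB20 k) /\ size (gB20 k) <= r + t + 7.
Proof.
move=> hk hK; split; last first.
  rewrite /gB20 /= !size_cat /= !size_mapw /= !size_cat /= !size_mapw /=.
  have := walk_size (A1 k) A' (full_last (ii hr k)); have := walk_size C (K k) (full_all t); lia.
have hd := K_diff k.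
apply/and3P; split.
- rewrite /gB20 /u /v /A1; repeat (rewrite /= ?cat_path /= ?lastA ?lastC //).
  by repeat (apply/andP; split) => //; try adj_step.
- by rewrite /gB20; do 6 rewrite ?last_cat /=.
- have F4 := negbTE hA; have F5 := negbTE hC; have F6 := F7''; have F9 := F8''.
  have F1 := A1_neq2 k; have F2 := A1_neq2s k; have F3 := walkA_notin k.
  have F10 : (A' == A1 k) = false by rewrite eq_sym.
  have F11 : (C == K k) = false by rewrite eq_sym.
  have F12 := K_neq k; have F13 := K_neqs k.
  rewrite /gB20 /u /v; uniq_norm; o_norm.
  rewrite ?hk ?hK ?F1 ?F2 ?F3 ?F4 ?F5 ?F6 ?F9 ?F10 ?F11 ?F12 ?F13 ?walk_notin ?uniq_mapAw ?uniq_mapCw ?andbF ?andFb ?orbF ?orFb.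
  all: by [].
Qed.

Lemma m20_path k : is_path u v (m20 k) /\ size (m20 k) <= r + t + 7.
Proof.
rewrite /m20; case: ifP => [/eqP h|h1]; first exact: dA20_path.
case: ifP => [/eqP h|h2]; [exact: gA20_path | exact: gB20_path].
Qed.

Lemma E1_20_path : is_path u v E1_20 /\ size E1_20 <= r + t + 7.
Proof.
split; last first.
  rewrite /E1_20 /= !size_cat /= !size_mapw /= !size_cat /= !size_mapw /=.
  have := walk_size A A' (full_all r); have := walk_size C C' (full_all t); lia.
apply/and3P; split.
- rewrite /E1_20 /u /v /B1; repeat (rewrite /= ?cat_path /= ?lastA ?lastC //).
  by repeat (apply/andP; split) => //; try adj_step.
- by rewrite /E1_20; do 6 rewrite ?last_cat /=.
- have F4 := negbTE hA; have F5 := negbTE hC; have F6 := F7''; have F9 := F8''.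
  have F1 := B1_neq; have F2 := B1_neqs.
  rewrite /E1_20 /u /v; uniq_norm; o_norm.
  rewrite ?F1 ?F2 ?F4 ?F5 ?F6 ?F9 ?walk_notin ?uniq_mapAw ?uniq_mapCw ?andbF ?andFb ?orbF ?orFb.
  all: by [].
Qed.

Lemma E2_20_path : is_path u v E2_20 /\ size E2_20 <= r + t + 7.
Proof.
split; last first.
  rewrite /E2_20 /= !size_cat /= !size_mapw /= !size_cat /= !size_mapw /=.
  have := walk_size A A' (full_all r); have := walk_size C C' (full_all t); lia.
apply/and3P; split.
- rewrite /E2_20 /u /v; repeat (rewrite /= ?cat_path /= ?lastA ?lastC //).
  by repeat (apply/andP; split) => //; try adj_step.
- by rewrite /E2_20; do 6 rewrite ?last_cat /=.
- have F4 := negbTE hA; have F5 := negbTE hC; have F6 := F7''; have F9 := F8''.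
  rewrite /E2_20 /u /v; uniq_norm; o_norm.
  rewrite ?F4 ?F5 ?F6 ?F9 ?walk_notin ?uniq_mapAw ?uniq_mapCw ?andbF ?andFb ?orbF ?orFb.
  all: by [].
Qed.

Definition SM20 k (x : V) : bool :=
  if A1 k == A' then
    [&& vB x == B, vA x == A' & ((vd x == o2) && (vC x == C))
        || ((vd x == o0) && ((vC x == C) || (vC x (pk k) == K k (pk k))))]
  else if K k == C then
    (vB x == B) && ([&& vd x == o2, vC x == C & (vA x == A') || (vA x (ii hr k) == A1 k (ii hr k))]
                    || [&& vd x == o0, vA x == A' & vC x == C])
  else (vB x == B) && [|| [&& vd x == o2, vA x == A1 k & vC x == C], (vd x == o0) && (vA x == A1 k),
                          (vd x == o2) && (vC x == K k) | [&& vd x == o0, vA x == A' & vC x == K k]].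
Definition S1_20 (x : V) : bool := (vB x == B1) || ((vB x == B) && (vd x == o1)).
Definition S2_20 (x : V) : bool :=
  (vB x == B) && (((vd x == o0) && (vA x == A)) || ((vd x == o2) && (vC x == C'))).

Lemma m20_mem k x : x \in u :: m20 k -> [\/ x = u, x = v | SM20 k x].
Proof.
rewrite /m20 /SM20; case: ifP => hk.
  rewrite /dA20; msplit; try (by constructor 1); try (by constructor 2); constructor 3;
    rewrite /vA /vB /vC /vd /= ?eqxx /= ?orbT //.
  by apply/orP; right; apply/eqP; exact: walk_first hZ.
case: ifP => hK.
  rewrite /gA20; msplit; try (by constructor 1); try (by constructor 2); constructor 3;
    rewrite /vA /vB /vC /vd /= ?eqxx /= ?orbT //.
  rewrite orbF; case: (eqVneq Z A') => [e|nZ]; first by apply/orP; left; apply/eqP.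
  by apply/orP; right; apply/eqP; exact: walk_lastp hZ nZ.
rewrite /gB20; msplit; try (by constructor 1); try (by constructor 2); constructor 3;
  rewrite /vA /vB /vC /vd /= ?eqxx /= ?orbT //.
Qed.

Lemma E1_20_mem x : x \in u :: E1_20 -> [\/ x = u, x = v | S1_20 x].
Proof.
rewrite /E1_20; msplit; try (by constructor 1); try (by constructor 2); constructor 3;
  rewrite /S1_20 /vA /vB /vC /vd /= ?eqxx /= ?orbT //.
Qed.

Lemma E2_20_mem x : x \in u :: E2_20 -> [\/ x = u, x = v | S2_20 x].
Proof.
rewrite /E2_20; msplit; try (by constructor 1); try (by constructor 2); constructor 3;
  rewrite /S2_20 /vA /vB /vC /vd /= ?eqxx /= ?orbT //.
Qed.

Lemma Kp_eqE k k' : (K k' (pk k) == K k (pk k)) = (k' == k).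
Proof. by apply/eqP/eqP => [/Kp_inj ->|->]. Qed.
Lemma A1p_eqE k k' : (A1 k' (ii hr k) == A1 k (ii hr k)) = (k' == k).
Proof. by apply/eqP/eqP => [/A1p_inj ->|->]. Qed.

Ltac fin20 := match goal with H : is_true _ |- _ => move: H; rwh; rwh; rwh;
  rewrite ?A1_eqE2 ?K_eqE ?Kp_eqE ?A1p_eqE; rwn; rwn; rwn;
  rewrite ?A1_neq2 ?A1_neq2s ?K_neq ?K_neqs ?B1_neq ?B1_neqs ?F7'' ?F8'' ?(negbTE hA) ?(negbTE hC) ?eqxx;
  o_norm; rewrite ?andbF ?andFb ?orbF ?orFb; by [] end.

Lemma good20 : Good u v.
Proof.
apply: (@assemble r s t u v m20 E1_20 E2_20 (fun k x => SM20 k x) (fun x => S1_20 x) (fun x => S2_20 x)).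
- exact: m20_path.
- exact: E1_20_path.
- exact: E2_20_path.
- exact: m20_mem.
- exact: E1_20_mem.
- exact: E2_20_mem.
- move=> k k' x nk; rewrite /SM20.
  have nk' : k' != k by rewrite eq_sym.
  case h1 : (A1 k == A'); case h2 : (A1 k' == A'); case h3 : (K k == C); case h4 : (K k' == C) => /=;
  first [ by xdestr x; fin20 | move=> ? ?;
   first [ by move: nk; rewrite -A1_eqE2 (eqP h1) (eqP h2) eqxx
         | by move: nk; rewrite -K_eqE (eqP h3) (eqP h4) eqxx
         | by move: nk; rewrite -K_eqE (twist (eqP h1) (ex_intro _ (sg k') (eqP h4))) (eqP h4) eqxx
         | by move: nk; rewrite -K_eqE (twist (eqP h2) (ex_intro _ (sg k) (eqP h3))) (eqP h3) eqxx ]].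
- move=> k x; rewrite /SM20 /S1_20.
  case h1 : (A1 k == A'); case h2 : (K k == C); by xdestr x; fin20.
- move=> k x; rewrite /SM20 /S2_20.
  case h1 : (A1 k == A'); case h2 : (K k == C); by xdestr x; fin20.
- move=> x; rewrite /S1_20 /S2_20; xdestr x; fin20.
Qed.

End Case20.
Theorem lemma19 (r s t : nat) (u v : e3c_vertex r s t) :
  1 <= r -> r <= s -> s <= t ->
  vA u != vA v -> vB u = vB v -> vC u != vC v -> vd u != vd v ->
  exists P : 'I_(2 * r + 2) -> seq (e3c_vertex r s t),
    (forall i, is_path u v (P i) /\ size (P i) <= r + t + 7) /\
    (forall i j, i != j -> int_disjoint u v (P i) (P j)).
Proof.
move=> hr hrs hst; case: u => [[[A B] C] d]; case: v => [[[A' B'] C'] d'].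
rewrite /vA /vB /vC /vd /= => hA hB hC hd; subst B'.
suff : Good (mkv A B C d) (mkv A' B C' d') by [].
have hA' : A' != A by rewrite eq_sym.
have hC' : C' != C by rewrite eq_sym.
have e0 : forall h : 0 < 3, Ordinal h = o0 by move=> h; apply: val_inj.
have e1 : forall h : 1 < 3, Ordinal h = o1 by move=> h; apply: val_inj.
have e2 : forall h : 2 < 3, Ordinal h = o2 by move=> h; apply: val_inj.
case: d hd => [[|[|[|?]]] h0] //; case: d' => [[|[|[|?]]] h1] // hd; rewrite ?e0 ?e1 ?e2;
  first [ exact: good01 | exact: good20 | exact: good21
        | apply: good_rev; first [exact: good01 | exact: good20 | exact: good21]
        | by move: hd; rewrite ?e0 ?e1 ?e2 eqxx ].
Qed.
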